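(* For every ring $R$ and every nonnegative integer $n$, the set $\mathcal{D}^n(R)$ is closed in $R^R$.
   Context: Rings are commutative with unit. A derivation on $R$ is a map $d\colon R\to R$ with $d(x+y)=d(x)+d(y)$ and $d(xy)=d(x)y+d(y)x$. Inductively: $\mathcal{D}^0(R)=\{0\}$; for $n>0$, $D\in\mathcal{D}^n(R)$ if $D$ is additive and $D(xy)-D(x)y-D(y)x=B(x,y)$ for all $x,y\in R$, where $B$ in each variable separately is in $\mathcal{D}^{n-1}(R)$. $R^R$ is the set of all maps $R\to R$ with the product topology, where $R$ has the discrete topology. *)

(* Defs.v *)
From HB Require Import structures.
From mathcomp Require Import all_boot all_order all_algebra.
From mathcomp Require Import all_classical all_reals all_analysis.
Set Implicit Arguments. Unset Strict Implicit. Unset Printing Implicit Defensive.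
Import Order.TTheory GRing.Theory Num.Theory.
Local Open Scope ring_scope.

(* Commutative rings with unit: R : comPzRingType (the zero ring is allowed). *)

Definition defect (R : comPzRingType) (D : R -> R) (x y : R) : R :=
  D (x * y) - D x * y - D y * x.

Definition additive_map (R : comPzRingType) (D : R -> R) : Prop :=
  forall x y : R, D (x + y) = D x + D y.

Fixpoint Dn (R : comPzRingType) (n : nat) : set (R -> R) :=
  match n with
  | 0%N => [set D | D = (fun _ => 0)]
  | n'.+1 => [set D | additive_map D /\
                (forall x : R, Dn n' (fun y => defect D x y)) /\
                (forall y : R, Dn n' (fun x => defect D x y))]
  end.

(* Main.v *)
Require Import Defs.
From HB Require Import structures.
From mathcomp Require Import all_boot all_order all_algebra.
From mathcomp Require Import all_classical all_reals all_analysis.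
Import GRing.Theory.
Local Open Scope classical_set_scope.
Local Open Scope ring_scope.

Lemma Dn_approx (R : comPzRingType) (n : nat) (D : R -> R) :
  (forall s : seq R, exists2 D', Dn n D' & forall x, x \in s -> D' x = D x) ->
  Dn n D.
Proof.
elim: n D => [|n IH] D H /=.
  apply/funext => x; have [D' HD' E] := H [:: x].
  by rewrite -E ?mem_head // HD'.
split; [|split].
- move=> x y; have [D' [HD' _] E] := H [:: x; y; x + y].
  by rewrite -!E ?inE ?eqxx ?orbT // HD'.
- move=> x; apply: IH => s.
  have [D' [_ [HD' _]] E] := H (x :: s ++ map (fun y => x * y) s).
  exists (fun y => defect D' x y); first exact: HD'.
  move=> y ys.
  rewrite /defect !E // ?inE ?mem_cat ?ys ?eqxx ?orbT //.
  by rewrite (map_f (fun y => x * y)) ?orbT.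
- move=> y; apply: IH => s.
  have [D' [_ [_ HD']] E] := H (y :: s ++ map (fun x => x * y) s).
  exists (fun x => defect D' x y); first exact: HD'.
  move=> x xs.
  rewrite /defect !E // ?inE ?mem_cat ?xs ?eqxx ?orbT //.
  by rewrite (map_f (fun x => x * y)) ?orbT.
Qed.

Lemma ptws_nbhs_agree (R : comPzRingType) (s : seq R)
  (D : {ptws R -> discrete_topology R}) :
  nbhs D [set D' : {ptws R -> discrete_topology R} | forall x, x \in s -> D' x = D x].
Proof.
elim: s => [|a s IH].
  by apply: filterS (@filterT _ _ _); move=> D' _ x.
have h1 : nbhs D [set D' : {ptws R -> discrete_topology R} | D' a = D a].
  exact: (@proj_continuous R (fun _ => discrete_topology R) a D [set D a]
            (discrete_set1 _)).
apply: filterS (filterI h1 IH) => D' [Ea Es] x; rewrite inE => /orP[/eqP->//|].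
exact: Es.
Qed.

Theorem lemma2p1 (R : comPzRingType) (n : nat) :
  closed (Dn n : set {ptws R -> discrete_topology R}).
Proof.
move=> D HD; apply: Dn_approx => s.
have [D' [H1 H2]] := HD _ (@ptws_nbhs_agree R s D).
by exists D'.
Qed.
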